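(* Let $n\ge 2$, $m=qn$ with $q$ a positive integer, and assume $m\ge N:=67584n^3\log^2 m+25216n^4\log m+2354n^5+128n^2\log m+24n^3+3n^2+n$. Let $\pi_1,\dots,\pi_n$ be independent uniformly random orderings of the items and run Give-Away Round-Robin. Then for every agent $i$, $$\Pr\Big[\bigcup_{k<32\log m+4n}\ \bigcup_{j\ne i}\mathcal{E}^{ij}_k\Big]\le \frac{2048n^2\log^2 m+640n^3\log m+50n^4}{m}.$$
   Context: Logarithms are natural. Give-Away Round-Robin: Phase 1: for $i=1,\dots,n$ in order, and for each $j\ne i$ in increasing order, agent $i$ gives agent $j$ the unallocated item ranked lowest in $\pi_i$. Phase 2: Round-Robin on the remaining items: agents take turns in order $1,\dots,n,1,\dots,n,\dots$, on her turn agent $i$ takes the unallocated item ranked highest in $\pi_i$, until all items are allocated; final bundles $A_1,\dots,A_n$ each have $q$ items. $g\succ_i g'$ means $g$ is ranked above $g'$ in $\pi_i$; $b_{jk}$ is the $k$-th best item of $A_j$ according to $\pi_i$; $\mathcal{E}^{ij}_k$ is the event $b_{jk}\succ_i b_{ik}$ (defined for all $j\ne i$). *)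

(* Defs.v *)
From mathcomp Require Import all_boot all_order all_algebra all_fingroup.
From mathcomp Require Import reals exp.

Set Implicit Arguments.
Unset Strict Implicit.
Unset Printing Implicit Defensive.

(* Items are 'I_m, agents are 'I_n (agent 1 of the paper = ordinal 0).
   An ordering pi : {perm 'I_m} maps an item g to its rank (pi g),
   rank 0 being the best; g >-_i g' iff pi_i g < pi_i g'. *)

Section GARR.
Variables (n m : nat).

Definition profile := {ffun 'I_n -> {perm 'I_m}}.
Definition alloc := {ffun 'I_m -> option 'I_n}.

Definition unallocated (A : alloc) : {set 'I_m} := [set g | A g == None].

Definition best_in (p : {perm 'I_m}) (U : {set 'I_m}) : option 'I_m :=
  [pick g in U | [forall h in U, (p g <= p h)%N]].
Definition worst_in (p : {perm 'I_m}) (U : {set 'I_m}) : option 'I_m :=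
  [pick g in U | [forall h in U, (p h <= p g)%N]].

(* one step: (chooser c, receiver r, give) : if give, c gives r the
   worst unallocated item for pi_c; otherwise c (= r) takes her best. *)
Definition step (P : profile) (A : alloc) (s : 'I_n * 'I_n * bool) : alloc :=
  let: (c, r, give) := s in
  let pick := if give then worst_in (P c) (unallocated A)
              else best_in (P c) (unallocated A) in
  if pick is Some g0 then [ffun g => if g == g0 then Some r else A g]
  else A.

Definition phase1_steps : seq ('I_n * 'I_n * bool) :=
  flatten [seq [seq (i, j, true) | j <- enum 'I_n & j != i] | i <- enum 'I_n].

(* Phase 2: round robin 1..n,1..n,... ; steps after all items are
   allocated do nothing, so m rounds are (more than) enough. *)
Definition phase2_steps : seq ('I_n * 'I_n * bool) :=
  flatten (nseq m [seq (i, i, false) | i <- enum 'I_n]).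

Definition GARR (P : profile) : alloc :=
  foldl (step P) [ffun => None] (phase1_steps ++ phase2_steps).

Definition bundle (P : profile) (j : 'I_n) : {set 'I_m} :=
  [set g | GARR P g == Some j].

(* k-th best item (k >= 1) of a set according to pi; None if it has < k items *)
Definition kth_best (p : {perm 'I_m}) (S : {set 'I_m}) (k : nat) : option 'I_m :=
  nth None [seq Some g | g <- sort (fun g h => (p g <= p h)%N) (enum S)] k.-1.

(* event E^{ij}_k : b_{jk} >-_i b_{ik}, with b_{jk} the k-th best item of
   A_j according to pi_i *)
Definition event_E (P : profile) (i j : 'I_n) (k : nat) : bool :=
  match kth_best (P i) (bundle P j) k, kth_best (P i) (bundle P i) k with
  | Some bj, Some bi => (P i bj < P i bi)%N
  | _, _ => false
  end.

End GARR.

(* Main.v *)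
Require Import Defs.
From mathcomp Require Import all_boot all_order all_algebra all_fingroup.
From mathcomp Require Import reals exp.
From mathcomp Require Import zify ring lra.
Import Order.TTheory GRing.Theory Num.Theory.
Set Implicit Arguments.
Unset Strict Implicit.
Unset Printing Implicit Defensive.

Lemma card_lt_bound m (A : {set 'I_m}) b :
  (forall x, x \in A -> x < b) -> #|A| <= b.
Proof.
move=> H; rewrite cardE -(size_map val).
have <- : size (iota 0 b) = b by rewrite size_iota.
apply: uniq_leq_size; first by rewrite map_inj_uniq ?enum_uniq //; exact: val_inj.
by move=> y /mapP [x]; rewrite mem_enum => /H xb ->; rewrite mem_iota.
Qed.

Lemma card_ge_bound m (A : {set 'I_m}) a :
  (forall x, x \in A -> a <= x) -> #|A| <= m - a.
Proof.
move=> H; rewrite cardE -(size_map val).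
have <- : size (iota a (m - a)) = m - a by rewrite size_iota.
apply: uniq_leq_size; first by rewrite map_inj_uniq ?enum_uniq //; exact: val_inj.
move=> y /mapP [x]; rewrite mem_enum => /H xb ->; rewrite mem_iota xb /=.
have := ltn_ord x; lia.
Qed.

Lemma card_lt_exact m b : b <= m -> b <= #|[set x : 'I_m | x < b]|.
Proof.
move=> bm.
have E : #|[set widen_ord bm x | x in 'I_b]| = b.
  by rewrite card_imset ?card_ord //; move=> x y /(congr1 val) /= /val_inj.
rewrite -[X in X <= _]E; apply: subset_leq_card; apply/subsetP => y /imsetP [x _ ->].
by rewrite inE /=.
Qed.

Lemma union_bound (T I : finType) (B : {set T}) (X : {pred I}) (S : I -> {set T}) :
  (forall t, t \in B -> exists2 x, x \in X & t \in S x) ->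
  #|B| <= \sum_(x in X) #|S x|.
Proof.
move=> H.
apply: (@leq_trans (\sum_(t in B) \sum_(x in X) (t \in S x))).
  rewrite -sum1_card; apply: leq_sum => t /H [x xX tS].
  by rewrite (bigD1 x) //= tS.
apply: (@leq_trans (\sum_(t : T) \sum_(x in X) (t \in S x))).
  by rewrite [X in _ <= X](bigID (mem B)) /= leq_addr.
rewrite exchange_big /=; apply: leq_sum => x _.
by rewrite -sum1_card [X in _ <= X]big_mkcond /=.
Qed.

Lemma worst_inP m (p : {perm 'I_m}) U g0 :
  worst_in p U = Some g0 -> g0 \in U /\ m <= p g0 + 1 + #|~: U|.
Proof.
rewrite /worst_in; case: pickP => // x /andP [xU /forallP Hx] [<-]; split=> //.
have HU : #|U| <= (p x).+1.
  apply: (@leq_trans #|[set h | p h <= p x]|).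
    apply: subset_leq_card; apply/subsetP => h hU; rewrite inE.
    by have := Hx h; rewrite hU.
  rewrite -(card_imset _ (@perm_inj _ p)); apply: card_lt_bound.
  by move=> y /imsetP [h]; rewrite inE => hle ->; rewrite ltnS.
have := cardsC U; rewrite card_ord; lia.
Qed.

Lemma best_inP m (p : {perm 'I_m}) U g0 :
  best_in p U = Some g0 -> g0 \in U /\ p g0 <= #|~: U|.
Proof.
rewrite /best_in; case: pickP => // x /andP [xU /forallP Hx] [<-]; split=> //.
apply: (@leq_trans #|[set r : 'I_m | r < p x]|); first exact/card_lt_exact/ltnW.
apply: (@leq_trans #|[set h | p h < p x]|).
  rewrite -(card_imset _ (@perm_inj _ p)); apply: subset_leq_card.
  apply/subsetP => r; rewrite inE => rlt; apply/imsetP; exists ((p^-1)%g r).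
    by rewrite inE permKV.
  by rewrite permKV.
apply: subset_leq_card; apply/subsetP => h; rewrite !inE => hlt.
apply/negP => hU; have := Hx h; rewrite hU /=; lia.
Qed.

Definition nalloc n m (A : alloc n m) := #|~: unallocated A|.

Definition upd n m (A : alloc n m) g0 r : alloc n m :=
  [ffun g => if g == g0 then Some r else A g].

Lemma step_cases n m (P : profile n m) (A : alloc n m) c rcv (b : bool) :
  step P A (c, rcv, b) = A \/
  exists g0, [/\ A g0 = None, step P A (c, rcv, b) = upd A g0 rcv,
     (b -> m <= P c g0 + 1 + nalloc A) & (~~ b -> P c g0 <= nalloc A)].
Proof.
rewrite /=; case: b.
  case E: worst_in => [g0|]; last by left.
  right; exists g0; have [g0U H] := worst_inP E.
  by move: g0U; rewrite inE => /eqP g0N; split.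
case E: best_in => [g0|]; last by left.
right; exists g0; have [g0U H] := best_inP E.
by move: g0U; rewrite inE => /eqP g0N; split.
Qed.

Lemma nalloc_step n m (P : profile n m) (A : alloc n m) x : nalloc (step P A x) <= (nalloc A).+1.
Proof.
case: x => [[c rcv] b]; have [->|[g0 [g0N -> _ _]]] := step_cases P A c rcv b; first by [].
rewrite /nalloc; apply: (@leq_trans #|g0 |: ~: unallocated A|); last first.
  by rewrite cardsU1; case: (_ \in _).
apply: subset_leq_card; apply/subsetP => g; rewrite !inE ffunE.
by case: (g == g0).
Qed.

Lemma alloc_persist n m (P : profile n m) (A : alloc n m) x g : A g != None -> step P A x g = A g.
Proof.
move=> HA; case: x => [[c rcv] b]; have [->|[g0 [g0N -> _ _]]] := step_cases P A c rcv b; first by [].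
rewrite ffunE; case: (g =P g0) => // E; by rewrite E g0N in HA.
Qed.

Definition Qinv n m (P : profile n m) i K r (A : alloc n m) :=
  (forall g, P i g < r -> A g = Some i) /\ (forall g, r <= P i g < K -> A g = None).

Definition good n m (P : profile n m) i K M :=
  forall c g, c != i -> P i g < K -> M <= P c g /\ P c g < m - M.

Lemma Q_out n m (P : profile n m) i K r (A : alloc n m) g0 rcv :
  A g0 = None -> K <= P i g0 -> Qinv P i K r A -> Qinv P i K r (upd A g0 rcv).
Proof.
move=> g0N Kg [Q1 Q2]; split=> g Hg; rewrite ffunE; case: eqP => [E|_].
- by move: (Q1 g Hg); rewrite E g0N.
- exact: Q1.
- by move: Hg; rewrite E; lia.
- exact: Q2.
Qed.

Lemma Q_step_other n m (P : profile n m) i K M r (A : alloc n m) c rcv b :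
  c != i -> good P i K M -> nalloc A < M -> Qinv P i K r A ->
  Qinv P i K r (step P A (c, rcv, b)).
Proof.
move=> ci G HM HQ.
have [->|[g0 [g0N -> Hb Hnb]]] := step_cases P A c rcv b; first by [].
apply: Q_out => //; rewrite leqNgt; apply/negP => /(G c g0 ci) [h1 h2].
case: b Hb Hnb => [Hb _|_ Hnb]; [have := Hb isT | have := Hnb isT]; lia.
Qed.

Lemma Q_step_igive n m (P : profile n m) i K M r (A : alloc n m) rcv :
  M + K <= m -> nalloc A < M -> Qinv P i K r A ->
  Qinv P i K r (step P A (i, rcv, true)).
Proof.
move=> HmK HM HQ.
have [->|[g0 [g0N -> Hb _]]] := step_cases P A i rcv true; first by [].
apply: Q_out => //; have := Hb isT; lia.
Qed.

Lemma Q_step_ipick n m (P : profile n m) i K r (A : alloc n m) :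
  r < K -> K <= m -> Qinv P i K r A -> Qinv P i K r.+1 (step P A (i, i, false)).
Proof.
move=> rK Km [Q1 Q2].
have rm : r < m by lia.
set h := ((P i)^-1)%g (Ordinal rm).
have Ph : P i h = r :> nat by rewrite /h permKV.
have hN : A h = None by apply: Q2; rewrite Ph leqnn.
rewrite /=; case E: best_in => [g0|]; last first.
  move: E; rewrite /best_in; case: pickP => // /(_ h); rewrite !inE hN eqxx /=.
  move/negbT/negP; case; apply/forallP => h'; apply/implyP; rewrite inE => /eqP h'N.
  rewrite Ph leqNgt; apply/negP => /Q1; by rewrite h'N.
have [g0U Hle] := best_inP E; move: g0U; rewrite inE => /eqP g0N.
have Pg0 : P i g0 = r :> nat.
  have : P i g0 <= P i h.
    by move: E; rewrite /best_in; case: pickP => // x /andP [_ /forallP /(_ h)]; rewrite inE hN eqxx /= => H [<-].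
  rewrite Ph; case: (ltngtP (P i g0) r) => // /Q1; by rewrite g0N.
split=> g Hg; rewrite ffunE; case: eqP => // gg0.
- apply: Q1; have : P i g != P i g0 by apply/eqP => /perm_inj.
  by rewrite -!val_eqE /= Pg0; move: Hg; lia.
- by move: Hg; rewrite gg0 Pg0; lia.
- apply: Q2; have : P i g != P i g0 by apply/eqP => /perm_inj.
  by rewrite -!val_eqE /= Pg0; move: Hg; lia.
Qed.

Lemma fold_inv n m (P : profile n m) (Inv : alloc n m -> Prop) (s : seq (prod (prod (ordinal n) (ordinal n)) bool)) M (A : alloc n m) :
  (forall A' x, x \in s -> nalloc A' < M -> Inv A' -> Inv (step P A' x)) ->
  nalloc A + size s <= M -> Inv A ->
  Inv (foldl (step P) A s) /\ nalloc (foldl (step P) A s) <= nalloc A + size s.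
Proof.
elim: s A => [|x s IH] A H HM HA /=; first by rewrite addn0.
rewrite /= in HM.
have HA' : Inv (step P A x) by apply: H; [exact: mem_head | lia | exact: HA].
have Hn := nalloc_step P A x.
have [] := IH (step P A x).
- by move=> A' y ys; apply: H; rewrite inE ys orbT.
- lia.
- exact: HA'.
by move=> H1 H2; split => //; lia.
Qed.

Lemma fold_persist n m (P : profile n m) (A : alloc n m) s g :
  A g != None -> foldl (step P) A s g = A g.
Proof.
elim: s A => [|x s IH] A HA //=.
rewrite IH; first exact: alloc_persist.
by rewrite alloc_persist.
Qed.

Lemma sumn_map_le (T : Type) (e : seq T) (f : T -> nat) b :
  (forall x, f x <= b) -> sumn (map f e) <= size e * b.
Proof.
move=> H; elim: e => [|x e IH] //=; have := H x; rewrite mulSn; lia.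
Qed.

Lemma size_phase1 n : size (phase1_steps n) <= n * n.
Proof.
rewrite /phase1_steps size_flatten /shape -map_comp.
apply: (@leq_trans (size (enum 'I_n) * n)); last by rewrite size_enum_ord.
apply: sumn_map_le => c /=.
by rewrite size_map size_filter (leq_trans (count_size _ _)) // size_enum_ord.
Qed.

Lemma phase1_give n x : x \in phase1_steps n -> x.2 = true.
Proof. by case/flattenP => s /mapP [c _ ->] /mapP [j _ ->]. Qed.

Lemma foldl_cons (T R : Type) (f : R -> T -> R) z x s :
  foldl f z (x :: s) = foldl f (f z x) s.
Proof. by []. Qed.

Lemma round_step n m (P : profile n m) i K M r (A : alloc n m) (e : seq 'I_n) :
  uniq e -> i \in e -> good P i K M -> r < K -> K <= m -> nalloc A + size e <= M ->
  Qinv P i K r A ->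
  Qinv P i K r.+1 (foldl (step P) A [seq (c, c, false) | c <- e]) /\
  nalloc (foldl (step P) A [seq (c, c, false) | c <- e]) <= nalloc A + size e.
Proof.
move=> ue ie G rK Km HM HQ; move: ue HM; case/splitPr: ie => s1 s2.
rewrite cat_uniq /= => /and3P [_ /norP [ni1 _] /andP [ni2 _]].
rewrite size_cat /= => HM.
rewrite map_cat foldl_cat map_cons foldl_cons.
have [Q1 N1'] : Qinv P i K r (foldl (step P) A [seq (c, c, false) | c <- s1]) /\
   nalloc (foldl (step P) A [seq (c, c, false) | c <- s1]) <= nalloc A + size [seq (c, c, false) | c <- s1].
  apply: (fold_inv (M := M)) => //.
  - move=> A' x /mapP [c cs1 ->] HA' HQ'; apply: Q_step_other HA' HQ' => //.
    by apply: contraNneq ni1 => <-.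
  - by rewrite size_map; apply: leq_trans HM; rewrite leq_add2l leq_addr.

set A1 := foldl _ A _ in Q1 N1'.
have Q2 := Q_step_ipick rK Km Q1.
have N2 := nalloc_step P A1 (i, i, false).
have [Q3 N3] : Qinv P i K r.+1 (foldl (step P) (step P A1 (i, i, false)) [seq (c, c, false) | c <- s2]) /\
   nalloc (foldl (step P) (step P A1 (i, i, false)) [seq (c, c, false) | c <- s2]) <= nalloc (step P A1 (i, i, false)) + size [seq (c, c, false) | c <- s2].
  apply: (fold_inv (M := M)) => //.
  - move=> A' x /mapP [c cs2 ->] HA' HQ'; apply: Q_step_other HA' HQ' => //.
    by apply: contraNneq ni2 => <-.
  - rewrite size_map; have H : nalloc A1 + (size s2).+1 <= M.
      apply: leq_trans HM; rewrite addnA leq_add2r. by rewrite size_map in N1'.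
    by apply: leq_trans H; rewrite addnS -addSn leq_add2r.
split => //; apply: leq_trans N3 _; rewrite size_map.
apply: leq_trans (leq_add N2 (leqnn _)) _; rewrite addSnnS addnA leq_add2r; by rewrite size_map in N1'.
Qed.

Definition rnd n : seq ('I_n * 'I_n * bool) := [seq (c, c, false) | c <- enum 'I_n].

Lemma rounds_step n m (P : profile n m) i K M rho : forall (A : alloc n m) r,
  good P i K M -> K <= m -> r + rho <= K -> nalloc A + rho * n <= M -> Qinv P i K r A ->
  Qinv P i K (r + rho) (foldl (step P) A (flatten (nseq rho (rnd n)))) /\
  nalloc (foldl (step P) A (flatten (nseq rho (rnd n)))) <= nalloc A + rho * n.
Proof.
elim: rho => [|rho IH] A r G Km Hr HM HQ; first by rewrite addn0 mul0n addn0.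
rewrite /= foldl_cat.
have rK : r < K by move: Hr; lia.
have HM1 : nalloc A + size (enum 'I_n) <= M.
  by rewrite size_enum_ord; apply: leq_trans HM; rewrite leq_add2l mulSn leq_addr.
have [Q1 N1] := round_step (enum_uniq 'I_n) (mem_enum _ i) G rK Km HM1 HQ.
rewrite size_enum_ord in N1.
have Hr1 : r.+1 + rho <= K by rewrite addSnnS.
have HM2 : nalloc (foldl (step P) A (rnd n)) + rho * n <= M.
  apply: leq_trans HM; apply: leq_trans (leq_add N1 (leqnn _)) _.
  by rewrite mulSn addnA leq_add2r.
have [Q2 N2] := IH (foldl (step P) A (rnd n)) r.+1 G Km Hr1 HM2 Q1.
rewrite -addSnnS; split => //.
apply: leq_trans N2 _; apply: leq_trans (leq_add N1 (leqnn _)) _.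
by rewrite mulSn addnA leq_add2r.
Qed.

Lemma garr_top n m (P : profile n m) i K :
  good P i K (n * n + K * n) -> n * n + K * n + K <= m ->
  forall g, P i g < K -> GARR P g = Some i.
Proof.
set M := n * n + K * n => G HmK g Hg.
have Km : K <= m by apply: leq_trans HmK; rewrite leq_addl.
set A0 : alloc n m := [ffun => None].
have N0 : nalloc A0 = 0.
  rewrite /nalloc; apply/eqP; rewrite cards_eq0; apply/eqP/setP => h.
  by rewrite !inE ffunE.
have Q0 : Qinv P i K 0 A0 by split => h //; rewrite ffunE.
have [Q1 N1] : Qinv P i K 0 (foldl (step P) A0 (phase1_steps n)) /\
   nalloc (foldl (step P) A0 (phase1_steps n)) <= nalloc A0 + size (phase1_steps n).
  apply: (fold_inv (M := M)) => //.
  - move=> A' [[c j] b] Hx HA' HQ'; have /= Hb := phase1_give Hx; subst b.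
    case: (c =P i) => [->|/eqP ci].
      by apply: (Q_step_igive (M := M)) => //; rewrite /M -addnA; exact: HmK.
    change (Qinv P i K 0 (step P A' (c, j, true))).
    exact: (Q_step_other j true ci G HA' HQ').
  - by rewrite N0 add0n (leq_trans (size_phase1 n)) // leq_addr.
rewrite N0 add0n in N1.
rewrite /GARR foldl_cat /phase2_steps.
have -> : nseq m [seq (c, c, false) | c <- enum 'I_n] =
   nseq K (rnd n) ++ nseq (m - K) (rnd n) by rewrite -nseqD subnKC.
rewrite flatten_cat foldl_cat.
have HM3 : nalloc (foldl (step P) A0 (phase1_steps n)) + K * n <= M.
  by rewrite /M leq_add2r (leq_trans N1 (size_phase1 n)).
have [Q2 _] := rounds_step (rho := K) (r := 0) G Km (leqnn _) HM3 Q1.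
have Hgi := (Q2.1 g Hg).
by rewrite fold_persist Hgi.
Qed.

Lemma kth_bestE m (p : {perm 'I_m}) S k b :
  kth_best p S k = Some b ->
  k.-1 < size (sort (fun g h : 'I_m => (p g <= p h)%N) (enum S)) /\
  nth b (sort (fun g h : 'I_m => (p g <= p h)%N) (enum S)) k.-1 = b.
Proof.
rewrite /kth_best => E; set s := sort _ _; have Hs : k.-1 < size s.
  by rewrite ltnNge; apply/negP => H; move: E; rewrite nth_default // size_map.
split => //; move: E; rewrite (nth_map b) //; by case.
Qed.

Lemma le_trans_p m (p : {perm 'I_m}) : transitive (fun g h : 'I_m => (p g <= p h)%N).
Proof. by move=> x y z; apply: leq_trans. Qed.

Lemma le_total_p m (p : {perm 'I_m}) : total (fun g h : 'I_m => (p g <= p h)%N).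
Proof. by move=> x y; apply: leq_total. Qed.

Lemma kth_lower m (p : {perm 'I_m}) S k b :
  kth_best p S k = Some b -> k.-1 <= p b.
Proof.
move/kth_bestE => /=; set s := sort _ _ => [[Hj Hb]].
set j := k.-1 in Hj Hb *.
have ss : sorted (fun g h : 'I_m => (p g <= p h)%N) s by apply: sort_sorted; exact: le_total_p.
have us : uniq s by rewrite sort_uniq enum_uniq.
have Hsz : size (map (fun t => val (p (nth b s t))) (iota 0 j.+1)) <= size (iota 0 (p b).+1).
  apply: uniq_leq_size.
    rewrite map_inj_in_uniq ?iota_uniq // => t1 t2; rewrite !mem_iota /= => h1 h2.
    move/val_inj/perm_inj/eqP; rewrite nth_uniq //; [by move/eqP | idtac | idtac].
    by rewrite add0n in h1; apply: leq_trans h1 Hj.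
    by rewrite add0n in h2; apply: leq_trans h2 Hj.
  move=> y /mapP [t]; rewrite mem_iota => ht ->.
  rewrite mem_iota add0n ltnS /=.
  move/andP: ht => [_ ht].
  have tj : t <= j by rewrite -ltnS.
  have ts : t < size s by apply: leq_trans ht Hj.
  have := @sorted_leq_nth _ _ (@le_trans_p m p) (fun x => leqnn _) b s ss t j ts Hj tj.
  by rewrite Hb.
by move: Hsz; rewrite size_map !size_iota.
Qed.

Lemma kth_upper m (p : {perm 'I_m}) (S : {set 'I_m}) k b :
  0 < k -> k <= m -> (forall g, p g < k -> g \in S) ->
  kth_best p S k = Some b -> p b <= k.-1.
Proof.
move=> k0 km HS /kth_bestE /=; set s := sort _ _ => [[Hj Hb]].
have ss : sorted (fun g h : 'I_m => (p g <= p h)%N) s by apply: sort_sorted; exact: le_total_p.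
have us : uniq s by rewrite sort_uniq enum_uniq.
rewrite leqNgt; apply/negP => Hbig.
set U := [set g | p g < k].
have cU : k <= #|U|.
  rewrite -(card_imset _ (@perm_inj _ p)).
  apply: leq_trans (@card_lt_exact m k km) _; apply: subset_leq_card.
  apply/subsetP => r; rewrite inE => rlt; apply/imsetP; exists ((p^-1)%g r).
    by rewrite inE permKV.
  by rewrite permKV.
have inS g : g \in U -> g \in s by rewrite inE => /HS; rewrite mem_sort mem_enum.
have Hsz : size (map (fun g => index g s) (enum U)) <= size (iota 0 k.-1).
  apply: uniq_leq_size.
    rewrite map_inj_in_uniq ?enum_uniq // => g1 g2; rewrite !mem_enum => h1 h2 E.
    by rewrite -(nth_index b (inS _ h1)) E nth_index // inS.
  move=> t /mapP [g]; rewrite mem_enum => gU ->; rewrite mem_iota /=.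
  rewrite ltnNge; apply/negP => le_jt.
  have ts : index g s < size s by rewrite index_mem inS.
  have := @sorted_leq_nth _ _ (@le_trans_p m p) (fun x => leqnn _) b s ss _ _ Hj ts le_jt.
  rewrite nth_index ?inS // Hb; move: gU; rewrite inE; lia.
move: Hsz; rewrite size_map size_iota -cardE -ltnS prednK // => H.
by have := leq_ltn_trans cU H; rewrite ltnn.
Qed.

Lemma event_false n m (P : profile n m) i j k K :
  0 < k -> k <= K -> K <= m -> (forall g, P i g < K -> g \in bundle P i) ->
  event_E P i j k = false.
Proof.
move=> k0 kK Km HS; rewrite /event_E.
case E1: kth_best => [bj|] //; case E2: kth_best => [bi|] //.
have h1 := kth_lower E1.
have h2 : P i bi <= k.-1.
  apply: (kth_upper k0 (leq_trans kK Km)) E2 => g Hg; apply: HS.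
  exact: leq_trans Hg kK.
by apply/negbTE; rewrite -leqNgt; apply: leq_trans h2 h1.
Qed.

Lemma count_fixed n m (i c : 'I_n) (s r : 'I_m) : c != i ->
  m * #|[set P : profile n m | P c (((P i)^-1)%g s) == r]| = #|{: profile n m}|.
Proof.
move=> ci.
pose F (r : 'I_m) := [set P : profile n m | P c (((P i)^-1)%g s) == r].
have le r1 r2 : #|F r1| <= #|F r2|.
  pose psi (P : profile n m) : profile n m :=
    [ffun d => if d == c then (P d * tperm r1 r2)%g else P d].
  have psiK : involutive psi.
    move=> P; apply/ffunP => d; rewrite !ffunE; case: eqP => // ->.
    by rewrite -mulgA tperm2 mulg1.
  rewrite -(card_imset _ (inv_inj psiK)); apply: subset_leq_card.
  apply/subsetP => Q /imsetP [P]; rewrite !inE => /eqP HP ->.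
  rewrite !ffunE eqxx [i == c]eq_sym (negbTE ci) permM HP tpermL //.
have eqF r1 r2 : #|F r1| = #|F r2| by apply/eqP; rewrite eqn_leq !le.
rewrite -[RHS]sum1_card (partition_big (fun P : profile n m => P c (((P i)^-1)%g s)) xpredT) //=.
rewrite (eq_bigr (fun _ => #|F r|)); last first.
  by move=> r' _; rewrite sum1_card (eqF r r'); apply: eq_card => P; rewrite !inE.
by rewrite sum_nat_const card_ord.
Qed.

Lemma count_main n m (i : 'I_n) K (Xr : pred nat) :
  let M := n * n + K * n in
  n * n + K * n + K <= m -> (forall k, Xr k -> k <= K) ->
  m * #|[set P : profile n m |
       [exists k : 'I_m.+1, (0 < k) && Xr k
          && [exists j : 'I_n, (j != i) && event_E P i j k]]]|
  <= n * K * (M + M) * #|{: profile n m}|.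
Proof.
move=> M HmK kK.
have Km : K <= m by apply: leq_trans HmK; rewrite leq_addl.
set Bad := [set P : profile n m | _].
pose X := [set x : 'I_n * 'I_m * 'I_m |
  (x.1.1 != i) && (x.1.2 < K) && ((x.2 < M) || (m - M <= x.2))].
pose S (x : 'I_n * 'I_m * 'I_m) :=
  [set P : profile n m | P x.1.1 (((P i)^-1)%g x.1.2) == x.2].
have HB : forall P, P \in Bad -> exists2 x, x \in X & P \in S x.
  move=> P; rewrite inE => /existsP [k /andP [/andP [k0 /kK kK'] /existsP [j /andP [_ Ej]]]].
  case: (boolP [exists x in X, P \in S x]) => [/exists_inP //|/negP H].
  have G : good P i K M.
    move=> c g ci Hg; apply/andP.
    have : (c, P i g, P c g) \notin X.
      apply/negP => Hx; apply: H; apply/exists_inP; exists (c, P i g, P c g) => //.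
      by rewrite inE /= permK.
    by rewrite inE /= ci Hg /= negb_or -!leqNgt ltnNge.
  have Hg := garr_top G HmK.
  rewrite (@event_false n m P i j k K) // in Ej.
  by move=> g /Hg Hgi; rewrite inE Hgi.
have HU := union_bound HB.
have HS : m * (\sum_(x in X) #|S x|) = #|X| * #|{: profile n m}|.
  rewrite big_distrr /= (eq_bigr (fun _ => #|{: profile n m}|)).
    by rewrite sum_nat_const.
  by move=> x; rewrite inE => /andP [/andP [ci _] _]; apply: count_fixed.
have HX : #|X| <= n * K * (M + M).
  apply: (@leq_trans #|setX (setX [set: 'I_n] [set s : 'I_m | s < K])
                           ([set r : 'I_m | r < M] :|: [set r : 'I_m | m - M <= r])|).
    apply: subset_leq_card; apply/subsetP => [[[c s] r]]; rewrite !inE /=.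
    by case/andP => /andP [_ ->] ->.
  rewrite !cardsX cardsT card_ord; apply: leq_mul; first apply: leq_mul => //.
    by apply: card_lt_bound => x; rewrite inE.
  apply: leq_trans (leq_card_setU _ _) _; apply: leq_add.
    by apply: card_lt_bound => x; rewrite inE.
  apply: leq_trans (card_ge_bound (a := m - M) _) _.
    by move=> x; rewrite inE.
  have : M <= m by apply: leq_trans HmK; rewrite leq_addr.
  lia.
apply: leq_trans (leq_mul (leqnn m) HU) _; rewrite HS leq_mul2r HX orbT //.
Qed.

Local Open Scope ring_scope.


Lemma arith1 (R : realType) (nr L Kr mr : R) :
  2 <= nr -> 0 <= L -> 0 <= Kr -> Kr <= 32 * L + 4 * nr ->
  (2 ^+ 11 * 33) * nr ^+ 3 * L ^+ 2 + (2 ^+ 7 * 197) * nr ^+ 4 * L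
        + (2 * 11 * 107) * nr ^+ 5 + 128 * nr ^+ 2 * L + 24 * nr ^+ 3
        + 3 * nr ^+ 2 + nr <= mr ->
  nr * nr + Kr * nr + Kr <= mr.
Proof.
move=> n2 L0 K0 KX hN.
have e3 : nr ^+ 3 = nr * (nr * nr) by rewrite !exprS expr0 mulr1.
have e2 : nr ^+ 2 = nr * nr by rewrite !exprS expr0 mulr1.
have e4 : nr ^+ 4 = nr * nr ^+ 3 by rewrite exprS.
have e5 : nr ^+ 5 = nr * nr ^+ 4 by rewrite exprS.
have l2 : L ^+ 2 = L * L by rewrite !exprS expr0 mulr1.
rewrite e5 e4 e3 e2 l2 in hN.
have p1 : 0 <= nr * nr * L by nra.
have p2 : 0 <= nr * (nr * nr) * (L * L) by nra.
have p3 : 0 <= nr * (nr * (nr * nr)) * L by nra.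
have p4 : 4 <= nr * nr by nra.
have p5 : 8 <= nr * (nr * nr) by nra.
have p6 : 16 <= nr * (nr * (nr * nr)) by nra.
have p7 : 32 <= nr * (nr * (nr * (nr * nr))) by nra.
have h1 : Kr * (nr + 1) <= (32 * L + 4 * nr) * (nr + 1) by nra.
have h5 : 32 * L * (nr + 1) <= 128 * (nr * nr) * L by nra.
have h6 : 5 * (nr * nr) + 4 * nr <= 2354 * (nr * (nr * (nr * (nr * nr)))) by nra.
nra.
Qed.

Lemma arith2 (R : realType) (nr L Kr : R) :
  2 <= nr -> 0 <= L -> 0 <= Kr -> Kr <= 32 * L + 4 * nr ->
  nr * Kr * ((nr * nr + Kr * nr) + (nr * nr + Kr * nr)) <=
  2 ^+ 11 * nr ^+ 2 * L ^+ 2 + (2 ^+ 7 * 5) * nr ^+ 3 * L + 50 * nr ^+ 4.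
Proof.
move=> n2 L0 K0 KX.
have e3 : nr ^+ 3 = nr * (nr * nr) by rewrite !exprS expr0 mulr1.
have e2 : nr ^+ 2 = nr * nr by rewrite !exprS expr0 mulr1.
have e4 : nr ^+ 4 = nr * nr ^+ 3 by rewrite exprS.
have l2 : L ^+ 2 = L * L by rewrite !exprS expr0 mulr1.
rewrite e4 e3 e2 l2.
have nn : 0 <= nr * nr by nra.
have nnn : 0 <= nr * (nr * nr) by nra.
have k2 : Kr * Kr <= (32 * L + 4 * nr) * (32 * L + 4 * nr).
  apply: ler_pM => //.
have q1 : nr * nr * (Kr * Kr) <= nr * nr * ((32 * L + 4 * nr) * (32 * L + 4 * nr)) by apply: ler_wpM2l.
have q2 : nr * (nr * nr) * Kr <= nr * (nr * nr) * (32 * L + 4 * nr) by apply: ler_wpM2l.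
have p1 : 0 <= nr * (nr * nr) * L by nra.
have p4 : 0 <= nr * (nr * (nr * nr)) by nra.
nra.
Qed.


Theorem lemma4p11 (R : realType) (n q m : nat)
  (hn : (2 <= n)%N) (hq : (0 < q)%N) (hm : m = (q * n)%N)
  (hN : (2 ^+ 11 * 33) * n%:R ^+ 3 * ln (m%:R : R) ^+ 2 + (2 ^+ 7 * 197) * n%:R ^+ 4 * ln m%:R
        + (2 * 11 * 107) * n%:R ^+ 5 + 128 * n%:R ^+ 2 * ln m%:R + 24 * n%:R ^+ 3
        + 3 * n%:R ^+ 2 + n%:R <= m%:R)
  (i : 'I_n) :
  (#|[set P : profile n m |
       [exists k : 'I_m.+1,
          (0 < k)%N && ((k : nat)%:R < 32 * ln (m%:R : R) + 4 * n%:R)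
          && [exists j : 'I_n, (j != i) && event_E P i j k]]]|%:R
   / #|{: profile n m}|%:R : R)
  <= (2 ^+ 11 * n%:R ^+ 2 * ln m%:R ^+ 2 + (2 ^+ 7 * 5) * n%:R ^+ 3 * ln m%:R
      + 50 * n%:R ^+ 4) / m%:R.
Proof.
have m2 : (2 <= m)%N by rewrite hm; apply: leq_trans hn _; rewrite leq_pmull.
set L := ln (m%:R : R) in hN *.
have L0 : 0 <= L by apply: ln_ge0; rewrite ler1n; apply: leq_trans m2.
set Xr : R := 32 * L + 4 * n%:R.
have n0 : (0 : R) <= n%:R by [].
have Xr0 : 0 <= Xr by rewrite /Xr; lra.
set K := Num.truncn Xr.
have KX : (K%:R : R) <= Xr by rewrite -truncn_ge_nat.
have kK : forall k : nat, (k%:R : R) < Xr -> (k <= K)%N.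
  by move=> k /ltW; rewrite truncn_ge_nat.
have K0 : (0 : R) <= K%:R by [].
have n2 : (2 : R) <= n%:R by rewrite (ler_nat R 2 n).
have KX' : (K%:R : R) <= 32 * L + 4 * n%:R := KX.
have HmK : (n * n + K * n + K <= m)%N.
  rewrite -(ler_nat R) !natrD !natrM.
  exact: (@arith1 R _ _ _ _ n2 L0 K0 KX' hN).
have HC := @count_main n m i K (fun k => (k%:R : R) < Xr) HmK kK.
set Bad := [set P : profile n m | _] in HC *.
set N := #|{: profile n m}| in HC *.
have N0 : (0 < N)%N by apply/card_gt0P; exists [ffun => 1%g].
have m0 : (0 : R) < m%:R by rewrite ltr0n; apply: leq_trans m2.
rewrite ler_pdivrMr ?ltr0n // mulrAC ler_pdivlMr //.
have HC' : (#|Bad|%:R * m%:R : R) <= (n * K * ((n * n + K * n) + (n * n + K * n)))%:R * N%:R.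
  by rewrite -!natrM ler_nat mulnC.
apply: (le_trans HC'); apply: ler_wpM2r => //.
rewrite !natrM !natrD !natrM.
exact: (@arith2 R _ _ _ n2 L0 K0 KX').
Qed.
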